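(* Let $n\ge 5$. Then the strong metric dimension of $L(n)$ is $n(n-2)$.
   Context: For $n\ge 5$, $H(n)$ is the graph with vertex set $V_1\cup V_2$, where $V_1=\{v_1,\dots,v_n\}$ and $V_2=\{v_iv_j: 1\le i<j\le n\}$, and $v_r$ is adjacent to $v_iv_j$ iff $r\in\{i,j\}$ (no other edges). $L(n)$ is the line graph of $H(n)$: its vertices are the edges of $H(n)$, two being adjacent iff they share an endpoint. A set $Q\subseteq V(G)$ is a strong resolving set of $G$ if for any two distinct vertices $p,q$ there is $s\in Q$ such that $p$ lies on some shortest $q$–$s$ path or $q$ lies on some shortest $p$–$s$ path; the strong metric dimension is the minimum size of a strong resolving set. *)

(* Defs.v *)
From mathcomp Require Import all_boot.
Set Implicit Arguments.
Unset Strict Implicit.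
Unset Printing Implicit Defensive.

(* A walk from q of length (size w) is a sequence w with path e q w;
   it ends at last q w.  A shortest q-s path is a q-s walk of minimal length
   (minimal walks are automatically paths). *)
Definition shortest_path (T : finType) (e : rel T) (q s : T) (w : seq T) : Prop :=
  [/\ path e q w, last q w = s &
      forall w' : seq T, path e q w' -> last q w' = s -> size w <= size w'].

Definition on_shortest (T : finType) (e : rel T) (q s p : T) : Prop :=
  exists w, shortest_path e q s w /\ p \in q :: w.

Definition strong_resolving (T : finType) (e : rel T) (Q : {set T}) : Prop :=
  forall p q : T, p != q ->
    exists2 s, s \in Q & (on_shortest e q s p \/ on_shortest e p s q).

Definition is_strong_metric_dim (T : finType) (e : rel T) (k : nat) : Prop :=
  (exists Q : {set T}, strong_resolving e Q /\ #|Q| = k) /\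
  (forall Q : {set T}, strong_resolving e Q -> k <= #|Q|).

Definition is_edge (T : finType) (e : rel T) (E : {set T}) : bool :=
  [exists x, exists y, e x y && (E == [set x; y])].

Definition line_vertex (T : finType) (e : rel T) :=
  {E : {set T} | is_edge e E}.

Definition line_adj (T : finType) (e : rel T) : rel (line_vertex e) :=
  fun E F => (val E != val F) && (val E :&: val F != set0).

(* V1 = 'I_n (v_r), V2 = pairs (i,j) with i < j (v_i v_j) *)
Definition Hvert (n : nat) : finType :=
  ('I_n + {p : 'I_n * 'I_n | p.1 < p.2})%type.

Definition Hadj (n : nat) : rel (Hvert n) :=
  fun x y =>
    match x, y with
    | inl r, inr p => (r == (val p).1) || (r == (val p).2)
    | inr p, inl r => (r == (val p).1) || (r == (val p).2)
    | _, _ => false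
    end.

Definition Lvert (n : nat) : finType := line_vertex (@Hadj n).
Definition Ladj (n : nat) : rel (Lvert n) := @line_adj (Hvert n) (@Hadj n).

(* Main.v *)
Require Import Defs.
From mathcomp Require Import all_boot zify.
Set Implicit Arguments. Unset Strict Implicit.


Lemma walk_lb (T : finType) (e : rel T) (d : T -> T -> nat)
  (d0 : forall x, d x x = 0) (dlip : forall x y z, e x y -> d x z <= (d y z).+1) :
  forall w q, path e q w -> d q (last q w) <= size w.
Proof.
elim=> [|x w IH] q /=; first by rewrite d0.
case/andP=> hqx hp. apply: leq_trans (dlip _ _ _ hqx) _. by rewrite ltnS IH.
Qed.

Lemma walk_ex (T : finType) (e : rel T) (d : T -> T -> nat)
  (d0 : forall x, d x x = 0) (dz : forall x z, d x z = 0 -> x = z)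
  (dstep : forall x z, x != z -> exists y, e x y /\ (d y z).+1 = d x z) :
  forall k q s, d q s = k -> exists w, [/\ path e q w, last q w = s & size w = k].
Proof.
elim=> [|k IH] q s h; first by exists [::]; rewrite (dz _ _ h).
have nqs: q != s by apply/eqP => eq; rewrite eq d0 in h.
case: (dstep q s nqs) => y [hy hd]. rewrite h in hd.
case: (IH y s) => [|w [p l sz]]; first by case: hd.
by exists (y::w); rewrite /= hy p l sz.
Qed.

Lemma on_shortest_iff (T : finType) (e : rel T) (d : T -> T -> nat)
  (d0 : forall x, d x x = 0) (dz : forall x z, d x z = 0 -> x = z)
  (dlip : forall x y z, e x y -> d x z <= (d y z).+1)
  (dstep : forall x z, x != z -> exists y, e x y /\ (d y z).+1 = d x z) q s p :
  on_shortest e q s p <-> d q p + d p s = d q s.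
Proof.
have lb : forall w q s, path e q w -> last q w = s -> d q s <= size w.
  by move=> w q' s' pw <-; exact: (walk_lb d0 dlip pw).
have tri : forall q p s, d q s <= d q p + d p s.
  move=> q' p' s'.
  case: (walk_ex d0 dz dstep (erefl (d q' p'))) => w1 [p1 l1 s1].
  case: (walk_ex d0 dz dstep (erefl (d p' s'))) => w2 [p2 l2 s2].
  rewrite -s1 -s2 -size_cat; apply: lb; first by rewrite cat_path p1 l1 p2.
  by rewrite last_cat l1 l2.
split.
- case=> w [[pw lw minw] pin].
  case: (walk_ex d0 dz dstep (erefl (d q s))) => w0 [p0 l0 s0].
  have sw : size w <= d q s by rewrite -s0; apply: minw.
  apply/eqP; rewrite eqn_leq tri andbT.
  move: pin; rewrite inE => /orP [/eqP ->|pin]; first by rewrite d0; apply: leq_trans sw; apply: lb.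
  case/splitPr: pin pw lw sw => w1 w2.
  rewrite cat_path last_cat /= => /andP [pa /andP [pb1 pb]] la sw.
  apply: leq_trans sw; rewrite size_cat /= addnS -addSn.
  apply: leq_add; last by apply: lb pb la.
  rewrite -(size_rcons w1 p); apply: lb; last by rewrite last_rcons.
  by rewrite rcons_path pa.
- move=> h.
  case: (walk_ex d0 dz dstep (erefl (d q p))) => w1 [p1 l1 s1].
  case: (walk_ex d0 dz dstep (erefl (d p s))) => w2 [p2 l2 s2].
  exists (w1 ++ w2); split; last first.
    by rewrite -cat_cons mem_cat -l1 mem_last.
  split; first by rewrite cat_path p1 l1 p2.
    by rewrite last_cat l1 l2.
  move=> w' pw' lw'. rewrite size_cat s1 s2 h. exact: lb pw' lw'.
Qed.

Section S.
Variable m : nat.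
Local Notation n := m.+1.
Definition hub (E : Lvert n) : 'I_n := odflt ord0 [pick r | inl r \in val E].
Definition oth (E : Lvert n) : 'I_n :=
  match [pick p | inr p \in val E] with
  | Some p => if (val p).1 == hub E then (val p).2 else (val p).1
  | None => ord0 end.

Lemma hubE (E : Lvert n) r p : val E = [set inl r; inr p] -> hub E = r.
Proof.
move=> h; rewrite /hub; case: pickP => [x|]; rewrite h ?inE /=.
  by case/orP=> /eqP // [].
by move/(_ r); rewrite !inE eqxx.
Qed.

Lemma othE (E : Lvert n) r p : val E = [set inl r; inr p] ->
  oth E = if (val p).1 == r then (val p).2 else (val p).1.
Proof.
move=> h; rewrite /oth (hubE h); case: pickP => [x|]; rewrite h ?inE /=.
  by move=> /eqP [->].
by move/(_ p); rewrite !inE eqxx orbT.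
Qed.

Lemma Lraw (E : Lvert n) : exists r, exists p : {q : 'I_n * 'I_n | q.1 < q.2},
  (val E = [set inl r; inr p]) /\ (((val p).1 == r) || ((val p).2 == r)).
Proof.
case: E => S /= /existsP [x /existsP [y /andP [hxy /eqP ->]]].
case: x hxy => [a|a]; case: y => [b|b] //= hxy.
  by exists a, b; rewrite ![_ == a]eq_sym.
by exists b, a; rewrite setUC ![_ == b]eq_sym.
Qed.

Lemma Lspec (E : Lvert n) : exists p : {q : 'I_n * 'I_n | q.1 < q.2},
  (val E = [set inl (hub E); inr p]) /\
  ((((val p).1 == hub E) && ((val p).2 == oth E)) || (((val p).2 == hub E) && ((val p).1 == oth E))).
Proof.
case: (Lraw E) => r [p [h hp]]; exists p.
rewrite (othE h) (hubE h) h; split => //.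
case: eqP hp => [->|] /=; first by rewrite !eqxx.
by move=> _ ->; rewrite eqxx.
Qed.

Lemma hub_oth (E : Lvert n) : hub E != oth E.
Proof.
case: (Lspec E) => [[[a b] /= lt]] [_] /=.
by case/orP=> /andP [/eqP <- /eqP <-]; apply/eqP => eq; move: lt; rewrite eq ltnn.
Qed.

Lemma Linj (E F : Lvert n) : hub E = hub F -> oth E = oth F -> E = F.
Proof.
case: (Lspec E) => [[[a b] /= lt]] [hE /= pE].
case: (Lspec F) => [[[c d] /= lt']] [hF /= pF] h1 h2.
apply: val_inj => /=; rewrite hE hF h1; congr [set _; inr _].
apply: val_inj => /=. rewrite h1 h2 in pE.
move: pE pF (lt) (lt') => /orP [] /andP [/eqP e1 /eqP e2] /orP [] /andP [/eqP e3 /eqP e4];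
  rewrite -e1 -e2 in e3 e4 => /= l1 l2; congr (_, _); apply: val_inj; subst; lia.
Qed.

Lemma inl_eq (a b : 'I_n) : (inl a == inl b :> Hvert n) = (a == b).
Proof. by apply/eqP/eqP => [[]|->]. Qed.
Lemma inlr_eq (a : 'I_n) p : (inl a == inr p :> Hvert n) = false.
Proof. by apply/eqP. Qed.
Lemma inrl_eq (a : 'I_n) p : (inr p == inl a :> Hvert n) = false.
Proof. by apply/eqP. Qed.
Lemma inr_eq p q : (inr p == inr q :> Hvert n) = (p == q).
Proof. by apply/eqP/eqP => [[]|->]. Qed.

Lemma set2I_neq0 (T : finType) (a b c d : T) :
  ([set a; b] :&: [set c; d] != set0) = [|| a == c, a == d, b == c | b == d].
Proof.
apply/set0Pn/idP => [[x]|].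
  by rewrite !inE => /andP [/orP [] /eqP -> /orP [] /eqP ->]; rewrite eqxx ?orbT.
case/or4P => /eqP ->; [exists c | exists d | exists c | exists d]; by rewrite !inE !eqxx ?orbT.
Qed.

Ltac dec := repeat (rewrite ?eqxx /=; match goal with |- context[?a == ?b] => is_var a; is_var b; case: (a =P b) => [?|?]; subst end); rewrite ?eqxx /=.

Lemma Ladj_iff (E F : Lvert n) : Ladj E F =
  (E != F) && ((hub E == hub F) || ((hub E == oth F) && (oth E == hub F))).
Proof.
rewrite /Ladj /line_adj val_eqE; case: (E =P F) => //= nEF.
case: (Lspec E) => [[[a b] /= lt]] [hE /= pE].
case: (Lspec F) => [[[c d] /= lt']] [hF /= pF].
rewrite hE hF set2I_neq0 inl_eq inlr_eq inrl_eq inr_eq -val_eqE /=.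
have ne : ~ (hub E = hub F /\ oth E = oth F) by case=> *; apply: nEF; apply: Linj.
move: ne pE pF (lt) (lt'); move: (hub E) (oth E) (hub F) (oth F) => r o r' o'.
move=> ne /orP [] /andP [/eqP e1 /eqP e2] /orP [] /andP [/eqP e3 /eqP e4] /= l1 l2; subst;
  rewrite -[_ == exist _ _ _]val_eqE /= xpair_eqE; dec; try lia; by case: ne.
Qed.

Lemma Lsurj (r o : 'I_n) : r != o -> exists E : Lvert n, hub E = r /\ oth E = o.
Proof.
move=> ro; case: (ltngtP r o) => [lt|gt|eq]; last by rewrite (val_inj eq) eqxx in ro.
- pose p : {q : 'I_n * 'I_n | q.1 < q.2} := exist _ (r, o) lt.
  have he : is_edge (@Hadj n) [set inl r; inr p].
    by apply/existsP; exists (inl r); apply/existsP; exists (inr p); rewrite /= !eqxx.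
  pose E : Lvert n := exist (fun S : {set Hvert n} => is_edge (@Hadj n) S) _ he.
  exists E; split; first exact: (@hubE E r p).
  by rewrite (@othE E r p (erefl _)) /= eqxx.
- pose p : {q : 'I_n * 'I_n | q.1 < q.2} := exist _ (o, r) gt.
  have he : is_edge (@Hadj n) [set inl r; inr p].
    by apply/existsP; exists (inl r); apply/existsP; exists (inr p); rewrite /= !eqxx orbT.
  pose E : Lvert n := exist (fun S : {set Hvert n} => is_edge (@Hadj n) S) _ he.
  exists E; split; first exact: (@hubE E r p).
  by rewrite (@othE E r p (erefl _)) /= eq_sym (negbTE ro).
Qed.

Definition dd (r j s k : 'I_n) : nat :=
  if r == s then (if j == k then 0 else 1)
  else if (j == s) && (k == r) then 1
  else if (j == s) || (k == r) then 2 else 3.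

Definition nxt (r j s k : 'I_n) : 'I_n * 'I_n :=
  if (r == s) || ((j == s) && (k == r)) then (s, k) else if j == s then (s, r) else (r, s).

Lemma dd_sym r j s k : dd r j s k = dd s k r j.
Proof. rewrite /dd; dec; by []. Qed.

Lemma dd_le3 r j s k : dd r j s k <= 3.
Proof. rewrite /dd; dec; by []. Qed.

Lemma dd_lip r j a b s k : r != j -> a != b -> s != k ->
  (r == a) || ((r == b) && (j == a)) -> dd r j s k <= (dd a b s k).+1.
Proof. rewrite /dd; dec; by []. Qed.

Lemma nxt_ok r j s k : r != j -> s != k -> ~~ ((r == s) && (j == k)) ->
  [/\ (nxt r j s k).1 != (nxt r j s k).2,
      (r == (nxt r j s k).1) || ((r == (nxt r j s k).2) && (j == (nxt r j s k).1)) &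
      (dd (nxt r j s k).1 (nxt r j s k).2 s k).+1 = dd r j s k].
Proof. rewrite /dd /nxt; dec; by []. Qed.

Definition dL (E F : Lvert n) : nat := dd (hub E) (oth E) (hub F) (oth F).

Lemma dL0 E : dL E E = 0.
Proof. by rewrite /dL /dd !eqxx. Qed.

Lemma dLz E F : dL E F = 0 -> E = F.
Proof.
rewrite /dL /dd; case: eqP => [h|_]; last by case: ifP => //; case: ifP.
by case: eqP => // h' _; apply: Linj.
Qed.

Lemma dLlip E F G : Ladj E F -> dL E G <= (dL F G).+1.
Proof.
rewrite Ladj_iff => /andP [_ h]; apply: dd_lip => //; exact: hub_oth.
Qed.

Lemma dLstep E G : E != G -> exists F, Ladj E F /\ (dL F G).+1 = dL E G.
Proof.
move=> nEG.
have nq : ~~ ((hub E == hub G) && (oth E == oth G)).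
  by apply/negP => /andP [/eqP h1 /eqP h2]; rewrite (Linj h1 h2) eqxx in nEG.
case: (nxt_ok (hub_oth E) (hub_oth G) nq) => h1 h2 h3.
case: (Lsurj h1) => F [hF oF]; exists F.
have eq : (dL F G).+1 = dL E G by rewrite /dL hF oF.
split => //; rewrite Ladj_iff hF oF h2 andbT.
by apply/eqP => EF; move: eq; rewrite EF; lia.
Qed.

Lemma onS (q s p : Lvert n) : on_shortest (@Ladj n) q s p <-> dL q p + dL p s = dL q s.
Proof. exact: (on_shortest_iff dL0 dLz dLlip dLstep). Qed.

Definition clique (h : 'I_n) : {set Lvert n} := [set E | hub E == h].

Lemma card_clique h : #|clique h| = m.
Proof.
have inj : {in clique h &, injective oth}.
  by move=> E F; rewrite !inE => /eqP h1 /eqP h2 ho; apply: Linj; rewrite ?h1 ?h2.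
rewrite -(card_in_imset inj).
have -> : oth @: clique h = [set~ h].
  apply/setP => o; rewrite !inE; apply/imsetP/idP => [[E]|ne].
    by rewrite inE => /eqP <- ->; rewrite eq_sym hub_oth.
  have ne' : h != o by rewrite eq_sym.
  case: (Lsurj ne') => E [h1 h2]; exists E => //; by rewrite inE h1.
by rewrite cardsC1 card_ord.
Qed.

Lemma card_L : #|Lvert n| = n * m.
Proof.
rewrite -sum1_card (partition_big hub xpredT) //=.
rewrite (eq_bigr (fun _ => m)); last by move=> j _; rewrite sum1dep_card card_clique.
by rewrite sum_nat_const card_ord.
Qed.

Lemma key1 h j1 j2 s k : h != j1 -> h != j2 -> j1 != j2 -> s != k -> s != h ->
  dd h j1 s k != 3 -> dd h j2 s k != 3 -> k == h.
Proof. rewrite /dd; dec; by []. Qed.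

Lemma key2 s s' h : s != h -> s' != h -> dd s h s' h != 3 -> s == s'.
Proof. rewrite /dd; dec; by []. Qed.

Lemma far_bound (S : {set Lvert n}) :
  (forall E F, E \in S -> F \in S -> E != F -> dL E F != 3) -> #|S| <= n.
Proof.
move=> far.
case: (boolP [exists E, exists F, [&& E \in S, F \in S, E != F & hub E == hub F]]).
- case/existsP => E1 /existsP [E2 /and4P [i1 i2 ne /eqP hh]].
  rewrite -(cardsID (clique (hub E1)) S).
  have c1 : #|S :&: clique (hub E1)| <= m.
    by apply: leq_trans (subset_leq_card (subsetIr _ _)) _; rewrite card_clique.
  have o12 : oth E1 != oth E2.
    by apply/eqP => ho; move: ne; rewrite (Linj hh ho) eqxx.
  have oh : forall F, F \in S :\: clique (hub E1) -> oth F == hub E1.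
    move=> F; rewrite !inE => /andP [nF iF].
    have nE1F : E1 != F by apply/eqP => eq; move: nF; rewrite eq eqxx.
    have nE2F : E2 != F by apply/eqP => eq; move: nF; rewrite -eq hh eqxx.
    have h2' : hub E1 != oth E2 by rewrite hh hub_oth.
    have f2 : dd (hub E1) (oth E2) (hub F) (oth F) != 3.
      by rewrite hh; exact: (far _ _ i2 iF nE2F).
    exact: (key1 (hub_oth E1) h2' o12 (hub_oth F) nF (far _ _ i1 iF nE1F) f2).
  have c2 : #|S :\: clique (hub E1)| <= 1.
    apply/card_le1_eqP => F G iF iG.
    have oF := oh F iF; have oG := oh G iG.
    move: iF iG; rewrite !inE => /andP [nF iF] /andP [nG iG].
    case: (G =P F) => // nGF.
    have : dL F G != 3 by apply: far => //; apply/eqP => eq; apply: nGF.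
    rewrite /dL (eqP oF) (eqP oG) => /(key2 nF nG) /eqP hFG.
    by apply: Linj; rewrite ?hFG // (eqP oF) (eqP oG).
  by apply: leq_trans (leq_add c1 c2) _; rewrite addn1.
- move=> nex.
  have inj : {in S &, injective hub}.
    move=> E F iE iF h; apply/eqP/negPn/negP => ne; move/negP: nex; apply.
    by apply/existsP; exists E; apply/existsP; exists F; rewrite iE iF ne h eqxx.
  rewrite -(card_in_imset inj); apply: leq_trans (max_card _) _; by rewrite card_ord.
Qed.

Lemma sr_far (Q : {set Lvert n}) : strong_resolving (@Ladj n) Q ->
  forall E F, E \in ~: Q -> F \in ~: Q -> E != F -> dL E F != 3.
Proof.
move=> sr E F iE iF ne; apply/eqP => d3.
have d3' : dL F E = 3 by rewrite /dL dd_sym.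
case: (sr E F ne) => s sQ [] /onS h.
- have hs := dd_le3 (hub F) (oth F) (hub s) (oth s).
  have : dL E s = 0 by move: h hs; rewrite /dL -/(dL F E) d3'; lia.
  by move/dLz => eq; move: iE; rewrite eq inE sQ.
- have hs := dd_le3 (hub E) (oth E) (hub s) (oth s).
  have : dL F s = 0 by move: h hs; rewrite /dL -/(dL E F) d3; lia.
  by move/dLz => eq; move: iF; rewrite eq inE sQ.
Qed.

Definition pk (z o t r j s k : 'I_n) : 'I_n * 'I_n :=
  if r == z then (if s == z then (if k != o then (k, z) else (j, z)) else (o, t)) else (o, t).

Lemma pk_ok z o t r j s k : z != o -> z != t -> o != t -> r != j -> s != k ->
  ~~ ((r == s) && (j == k)) -> (r == z) || ((r == o) && (j == z)) ->
  (s == z) || ((s == o) && (k == z)) ->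
  [/\ (pk z o t r j s k).1 != (pk z o t r j s k).2,
      ~~ (((pk z o t r j s k).1 == z) || (((pk z o t r j s k).1 == o) && ((pk z o t r j s k).2 == z))) &
      (dd s k r j + dd r j (pk z o t r j s k).1 (pk z o t r j s k).2 == dd s k (pk z o t r j s k).1 (pk z o t r j s k).2)
   || (dd r j s k + dd s k (pk z o t r j s k).1 (pk z o t r j s k).2 == dd r j (pk z o t r j s k).1 (pk z o t r j s k).2)].
Proof.
move=> zo zt ot rj sk nrs hr hs.
case/orP: hr => [/eqP ?|/andP [/eqP ? /eqP ?]]; case/orP: hs => [/eqP ?|/andP [/eqP ? /eqP ?]];
  subst; move: zo zt ot rj sk nrs; rewrite /pk /dd; dec; by [].
Qed.
End S.

Theorem theorem3p10 (n : nat) : 5 <= n ->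
  is_strong_metric_dim (@Ladj n) (n * (n - 2)).
Proof.
case: n => [|m] // hm.
pose z : 'I_m.+1 := ord0.
pose o : 'I_m.+1 := inord 1.
pose t : 'I_m.+1 := inord 2.
have vo : nat_of_ord o = 1 by rewrite /o inordK //; lia.
have vt : nat_of_ord t = 2 by rewrite /t inordK //; lia.
have zo : z != o by apply/eqP => /(congr1 (@nat_of_ord _)); rewrite vo.
have zt : z != t by apply/eqP => /(congr1 (@nat_of_ord _)); rewrite vt.
have ot : o != t by apply/eqP => /(congr1 (@nat_of_ord _)); rewrite vo vt.
pose I := [set E : Lvert m.+1 | (hub E == z) || ((hub E == o) && (oth E == z))].
have oz : o != z by rewrite eq_sym.
case: (Lsurj oz) => E1 [h1 o1].
have cI : #|I| = m.+1.
  have -> : I = E1 |: clique z.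
    apply/setP => E; rewrite !inE orbC; congr (_ || _).
    apply/andP/eqP => [[/eqP a /eqP b]|->]; last by rewrite h1 o1.
    by apply: Linj; rewrite ?a ?b.
  by rewrite cardsU1 card_clique inE h1 (negbTE oz).
split.
- exists (~: I); split; last first.
    by rewrite cardsCs setCK card_L cI; nia.
  move=> p q ne.
  case: (boolP (p \in ~: I)) => [pQ|pI].
    by exists p => //; left; apply/onS; rewrite dL0 addn0.
  case: (boolP (q \in ~: I)) => [qQ|qI].
    by exists q => //; right; apply/onS; rewrite dL0 addn0.
  move: pI qI; rewrite !inE !negbK => pI qI.
  have nrs : ~~ ((hub p == hub q) && (oth p == oth q)).
    by apply/negP => /andP [/eqP a /eqP b]; move: ne; rewrite (Linj a b) eqxx.
  case: (pk_ok zo zt ot (hub_oth p) (hub_oth q) nrs pI qI) => k1 k2 k3.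
  case: (Lsurj k1) => s [hs os]; exists s; first by rewrite !inE hs os.
  case/orP: k3 => /eqP h; [left|right]; apply/onS; by rewrite /dL hs os.
- move=> Q sr.
  have := far_bound (sr_far sr).
  rewrite (cardsCs Q) card_L; nia.
Qed.
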